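(* Let nonempty active action sets $A_{l,i}\subseteq\mathcal{A}$ be given, and let $\eta$ be the random exploration policy in which, independently for each state $(l,i)$, with probability $\frac{k}{2H}$ the action $e_{l,i}$ is drawn uniformly from $A_{l,i}$, and with probability $1-\frac{k}{2H}$ it is set to $e_{l,i}=\arg\max_{a\in A_{l,i}}p_i(l\mid l,a)$. Let $Q_{l,i}$ be the probability that $\eta$ visits state $(l,i)$. Then for any $i\in[H-1]$ and $l\in[k]$: $$Q_{s,i+1}\ \ge\ \max_{a\in A_{l,i}}\frac{k}{2HA}\,Q_{l,i}\,p_i(s\mid l,a)\qquad\text{for all } s<k,$$ and $$Q_{l,i+1}\ \ge\ \max_{a\in A_{l,i}}\Big(1-\frac{k}{2H}\Big)Q_{l,i}\,p_i(l\mid l,a)\ \ge\ \max_{a\in A_{l,i}}e^{-k/H}\,Q_{l,i}\,p_i(l\mid l,a).$$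
   Context: An episodic MDP has states $(l,i)$, $l\in[k]$, $i\in[H]$, with $k\le H$, a fixed start state in stage $1$, and an action set $\mathcal{A}$ of size $A$. For $i\in[H-1]$, action $a$ at state $(l,i)$ moves to state $(s,i+1)$ with probability $p_i(s\mid l,a)$, independently of everything else. (In the paper's setting the MDP is ordered: start state $(k,1)$, $p_i(s\mid l,a)=0$ for $s>l$, and the maximizer of $p_i(l\mid l,\cdot)$ over $A_{l,i}$ is identifiable from a known total order on actions.) A policy assigning an action to every state is executed by taking the assigned action at each visited state. *)

(* Defs.v *)
From HB Require Import structures.
From mathcomp Require Import all_boot all_order all_algebra.
From mathcomp Require Import all_classical all_reals all_analysis.
Set Implicit Arguments. Unset Strict Implicit. Unset Printing Implicit Defensive.
Import Order.TTheory GRing.Theory Num.Theory.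
Local Open Scope ring_scope.

(* Conventions (0-indexed): levels l : 'I_k, stages i : 'I_H,
   actions in a finite type Act (so A = #|Act|).
   p i l a s  = p_i(s | l, a)   (transition from (l,i) to (s,i+1)).
   Aset l i   = active action set A_{l,i}.
   amax l i   = the (fixed) argmax of p_i(l | l, .) over A_{l,i}. *)

Definition eps (R : realType) (k H : nat) : R := k%:R / (2 * H%:R).

Definition eprob (R : realType) (k H : nat) (Act : finType)
  (Aset : 'I_k -> 'I_H -> {set Act}) (amax : 'I_k -> 'I_H -> Act)
  (l : 'I_k) (i : 'I_H) (a : Act) : R :=
  eps R k H * ((a \in Aset l i)%:R / #|Aset l i|%:R)
  + (1 - eps R k H) * (a == amax l i)%:R.

(* probability of a deterministic policy pi under eta
   (independent choices at every state) *)
Definition policy_prob (R : realType) (k H : nat) (Act : finType)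
  (Aset : 'I_k -> 'I_H -> {set Act}) (amax : 'I_k -> 'I_H -> Act)
  (pi : {ffun 'I_k * 'I_H -> Act}) : R :=
  \prod_(x : 'I_k * 'I_H) @eprob R k H Act Aset amax x.1 x.2 (pi x).

Fixpoint vdist (R : realType) (k H : nat) (Act : finType)
  (p : 'I_H -> 'I_k -> Act -> 'I_k -> R) (s0 : 'I_k)
  (pi : {ffun 'I_k * 'I_H -> Act}) (n : nat) : 'I_k -> R :=
  match n with
  | 0 => fun s => (s == s0)%:R
  | n'.+1 => fun s =>
      match (insub n' : option 'I_H) with
      | Some j => \sum_(l : 'I_k) @vdist R k H Act p s0 pi n' l * p j l (pi (l, j)) s
      | None => 0
      end
  end.

Definition Qvisit (R : realType) (k H : nat) (Act : finType)
  (p : 'I_H -> 'I_k -> Act -> 'I_k -> R) (s0 : 'I_k)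
  (Aset : 'I_k -> 'I_H -> {set Act}) (amax : 'I_k -> 'I_H -> Act)
  (l : 'I_k) (n : nat) : R :=
  \sum_(pi : {ffun 'I_k * 'I_H -> Act})
     @policy_prob R k H Act Aset amax pi * @vdist R k H Act p s0 pi n l.

(* Main.v *)
Require Import Defs.
From HB Require Import structures.
From mathcomp Require Import all_boot all_order all_algebra.
From mathcomp Require Import all_classical all_reals all_analysis.
From mathcomp Require Import ring lra.
Import Order.TTheory GRing.Theory Num.Theory.
Local Open Scope ring_scope.

Definition setf (k H : nat) (Act : finType) (pi : {ffun 'I_k * 'I_H -> Act})
  (x0 : 'I_k * 'I_H) (b : Act) : {ffun 'I_k * 'I_H -> Act} :=
  [ffun x => if x == x0 then b else pi x].
Arguments setf {k H Act}.

Lemma setfK k H (Act : finType) (pi : {ffun 'I_k * 'I_H -> Act}) x0 b :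
  setf (setf pi x0 b) x0 (pi x0) = pi.
Proof. apply/ffunP => x; rewrite !ffunE; case: eqP => // ->; by []. Qed.

Lemma setf_x0 k H (Act : finType) (pi : {ffun 'I_k * 'I_H -> Act}) x0 b :
  setf pi x0 b x0 = b.
Proof. by rewrite ffunE eqxx. Qed.

Lemma prob_setf (R : realType) k H (Act : finType) Aset amax
  (pi : {ffun 'I_k * 'I_H -> Act}) x0 b :
  @policy_prob R k H Act Aset amax (setf pi x0 b) * @eprob R k H Act Aset amax x0.1 x0.2 (pi x0)
  = @policy_prob R k H Act Aset amax pi * @eprob R k H Act Aset amax x0.1 x0.2 b.
Proof.
rewrite /policy_prob (bigD1 x0) //= [in RHS](bigD1 x0) //= setf_x0.
rewrite (eq_bigr (fun x => @eprob R k H Act Aset amax x.1 x.2 (pi x))); last first.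
  by move=> x /negbTE hx; rewrite ffunE hx.
by rewrite mulrC mulrA [LHS]mulrAC.
Qed.

Lemma factor (R : realType) k H (Act : finType) Aset amax x0
  (G : {ffun 'I_k * 'I_H -> Act} -> R) (g : Act -> R) :
  (forall pi b, G (setf pi x0 b) = G pi) ->
  \sum_b @eprob R k H Act Aset amax x0.1 x0.2 b = 1 ->
  \sum_pi @policy_prob R k H Act Aset amax pi * (G pi * g (pi x0))
  = (\sum_pi @policy_prob R k H Act Aset amax pi * G pi)
    * (\sum_b @eprob R k H Act Aset amax x0.1 x0.2 b * g b).
Proof.
move=> hG h1.
rewrite mulr_suml.
under [RHS]eq_bigr => pi _ do rewrite mulr_sumr.
rewrite pair_big /=.
have hinj : injective (fun q : {ffun 'I_k * 'I_H -> Act} * Act => (setf q.1 x0 q.2, q.1 x0)).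
  apply: (can_inj (g := fun q : {ffun 'I_k * 'I_H -> Act} * Act => (setf q.1 x0 q.2, q.1 x0))).
  by case=> pi b /=; rewrite setfK setf_x0.
rewrite (reindex_inj hinj) /=.
rewrite -(pair_big xpredT xpredT (fun (pi : {ffun 'I_k * 'I_H -> Act}) b =>
   @policy_prob R k H Act Aset amax (setf pi x0 b) * G (setf pi x0 b) *
   (@eprob R k H Act Aset amax x0.1 x0.2 (pi x0) * g (pi x0)))) /=.
apply: eq_bigr => pi _.
transitivity (\sum_b @policy_prob R k H Act Aset amax pi * (G pi * g (pi x0))
   * @eprob R k H Act Aset amax x0.1 x0.2 b).
  by rewrite -mulr_sumr h1 mulr1.
apply: eq_bigr => b _.
rewrite hG.
have e := @prob_setf R k H Act Aset amax pi x0 b.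
set P' := policy_prob _ _ _ _ in e *; set ec := eprob _ _ _ _ _ _ in e *.
set P := policy_prob _ _ _ pi in e *; set eb := eprob _ _ _ _ _ b in e *.
transitivity ((P * eb) * (G pi * g (pi x0))); first by ring.
by rewrite -e; ring.
Qed.

Lemma vdist_setf (R : realType) k H (Act : finType) (p : 'I_H -> 'I_k -> Act -> 'I_k -> R)
  s0 (pi : {ffun 'I_k * 'I_H -> Act}) (l : 'I_k) (i : 'I_H) b n :
  (n <= i)%N -> forall s,
  @vdist R k H Act p s0 (setf pi (l, i) b) n s = @vdist R k H Act p s0 pi n s.
Proof.
elim: n => [|n IH] hn s //=.
case: insubP => [j _ ej|_] //.
apply: eq_bigr => l' _.
rewrite IH ?(ltnW hn) // ffunE.
case: eqP => // [[_ eji]].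
by move: hn; rewrite -ej eji ltnn.
Qed.

Lemma vdist_ge0 (R : realType) k H (Act : finType) (p : 'I_H -> 'I_k -> Act -> 'I_k -> R)
  s0 (pi : {ffun 'I_k * 'I_H -> Act}) :
  (forall (i : 'I_H), (i.+1 < H)%N -> forall l a s, 0 <= p i l a s) ->
  forall n, (n < H)%N -> forall s, 0 <= @vdist R k H Act p s0 pi n s.
Proof.
move=> hp; elim=> [|n IH] hn s /=; first by rewrite ler0n.
case: insubP => [j _ ej|_] //.
apply: sumr_ge0 => l' _; apply: mulr_ge0; first exact: (IH (ltnW hn)).
have hj : ((nat_of_ord j).+1 < H)%N by rewrite -[nat_of_ord j]/(val j) ej.
exact: (hp j hj l' _ s).
Qed.

Theorem lemma9 (R : realType) (k H : nat) (Act : finType)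
  (p : 'I_H -> 'I_k -> Act -> 'I_k -> R) (s0 : 'I_k)
  (Aset : 'I_k -> 'I_H -> {set Act}) (amax : 'I_k -> 'I_H -> Act) :
  (0 < k)%N -> (k <= H)%N ->
  (forall (i : 'I_H), (i.+1 < H)%N ->
     forall l a s, 0 <= p i l a s) ->
  (forall (i : 'I_H), (i.+1 < H)%N ->
     forall l a, \sum_(s : 'I_k) p i l a s = 1) ->
  (forall l i, Aset l i != finset.set0) ->
  (forall l i, amax l i \in Aset l i) ->
  (forall l (i : 'I_H), (i.+1 < H)%N ->
     forall a, a \in Aset l i -> p i l a l <= p i l (amax l i) l) ->
  forall (i : 'I_H) (l : 'I_k), (i.+1 < H)%N ->
    (forall s : 'I_k, (s < k.-1)%N ->
       forall a, a \in Aset l i ->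
         k%:R / (2 * H%:R * #|Act|%:R) * @Qvisit R k H Act p s0 Aset amax l i * p i l a s
           <= @Qvisit R k H Act p s0 Aset amax s i.+1)
    /\
    (forall a, a \in Aset l i ->
       (1 - k%:R / (2 * H%:R)) * @Qvisit R k H Act p s0 Aset amax l i * p i l a l
         <= @Qvisit R k H Act p s0 Aset amax l i.+1
       /\
       expR (- (k%:R / H%:R)) * @Qvisit R k H Act p s0 Aset amax l i * p i l a l
         <= (1 - k%:R / (2 * H%:R)) * @Qvisit R k H Act p s0 Aset amax l i * p i l a l).
Proof.
move=> hk hkH hp hsum hne hmax hamax i l hi.
have hH : (0 < H)%N by apply: leq_trans hkH.
have Hpos : (0 : R) < H%:R by rewrite ltr0n.
have kpos : (0 : R) < k%:R by rewrite ltr0n.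
have xle1 : k%:R / H%:R <= (1 : R).
  by rewrite ler_pdivrMr // mul1r ler_nat.
have x0 : (0 : R) <= k%:R / H%:R by apply: divr_ge0; apply: ltW.
have epsE : eps R k H = k%:R / H%:R / 2.
  by rewrite /eps [2 * _]mulrC invfM mulrA.
have eps0 : 0 <= eps R k H by rewrite epsE; apply: divr_ge0.
have eps1 : 0 <= 1 - eps R k H by rewrite epsE subr_ge0; lra.
have cardA : forall l i, (0 < #|Aset l i|)%N.
  by move=> l' i'; rewrite card_gt0.
have cardR : forall l i, (0 : R) < #|Aset l i|%:R by move=> l' i'; rewrite ltr0n.
have ep0 : forall l i a, 0 <= @eprob R k H Act Aset amax l i a.
  move=> l' i' a; rewrite /eprob; apply: addr_ge0; apply: mulr_ge0 => //.
have epsum : forall l i, \sum_b @eprob R k H Act Aset amax l i b = 1.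
  move=> l' i'; rewrite /eprob big_split /= -!mulr_sumr -mulr_suml.
  rewrite (eq_bigr (fun b => if b \in Aset l' i' then 1 else 0)); last first.
    by move=> b _; case: (b \in Aset l' i').
  rewrite -big_mkcond /= sumr_const mulfV; last by rewrite gt_eqF ?cardR.
  rewrite (bigD1 (amax l' i')) //= eqxx big1 ?addr0; last first.
    by move=> b /negbTE ->.
  by rewrite !mulr1 addrC subrK.
have prob0 : forall pi, 0 <= @policy_prob R k H Act Aset amax pi.
  by move=> pi; apply: prodr_ge0 => x _; apply: ep0.
have vd0 : forall pi s, 0 <= @vdist R k H Act p s0 pi i s.
  by move=> pi s; apply: vdist_ge0 => //; apply: ltn_ord.
have Q0 : 0 <= @Qvisit R k H Act p s0 Aset amax l i.
  by apply: sumr_ge0 => pi _; apply: mulr_ge0.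
have hstep : forall s, @Qvisit R k H Act p s0 Aset amax l i *
    (\sum_b @eprob R k H Act Aset amax l i b * p i l b s)
    <= @Qvisit R k H Act p s0 Aset amax s i.+1.
  move=> s.
  rewrite /Qvisit -(@factor R k H Act Aset amax (l, i)
     (fun pi => @vdist R k H Act p s0 pi i l) (fun b => p i l b s)) //=; last first.
    by move=> pi b; apply: vdist_setf.
  apply: ler_sum => pi _; apply: ler_wpM2l => //=.
  case: insubP => [j _ ej|]; last by rewrite ltn_ord.
  have -> : j = i by apply: val_inj.
  rewrite (bigD1 l) //= lerDl; apply: sumr_ge0 => l' _; apply: mulr_ge0 => //.
  exact: hp.
have hE : forall s a, a \in Aset l i ->
   @eprob R k H Act Aset amax l i a * p i l a s
   <= \sum_b @eprob R k H Act Aset amax l i b * p i l b s.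
  move=> s a ha; rewrite (bigD1 a) //= lerDl; apply: sumr_ge0 => b _.
  by apply: mulr_ge0 => //; apply: hp.
split.
  move=> s _ a ha.
  apply: le_trans (hstep s); rewrite [_ * Qvisit _ _ _ _ _ _]mulrC -[Qvisit _ _ _ _ _ _ * _ * _]mulrA.
  apply: ler_wpM2l => //; apply: le_trans (hE s a ha).
  apply: ler_wpM2r; first exact: hp.
  rewrite /eprob ha mul1r -[X in X <= _]addr0; apply: lerD; last first.
    by apply: mulr_ge0.
  rewrite /eps invfM mulrA; apply: ler_wpM2l => //.
  rewrite lef_pV2 ?posrE ?ltr0n ?cardA //; last first.
    by apply/card_gt0P; exists a.
  by rewrite ler_nat max_card.
move=> a ha; split.
  apply: le_trans (hstep l); rewrite [_ * Qvisit _ _ _ _ _ _]mulrC -[Qvisit _ _ _ _ _ _ * _ * _]mulrA.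
  apply: ler_wpM2l => //; apply: le_trans (hE l _ (hmax l i)).
  apply: le_trans (_ : (1 - eps R k H) * p i l (amax l i) l <= _).
    by apply: ler_wpM2l => //; apply: hamax.
  apply: ler_wpM2r; first exact: hp.
  rewrite /eprob eqxx mulr1 lerDr; apply: mulr_ge0 => //.
rewrite -!mulrA; apply: ler_wpM2r; first by apply: mulr_ge0 => //; apply: hp.
rewrite expRN -/(eps R k H) epsE.
set x := k%:R / H%:R in x0 xle1 *. clearbody x.
have e1 : 1 + x <= expR x := expR_ge1Dx x.
apply: le_trans (_ : (1 + x)^-1 <= _).
  by rewrite lef_pV2 ?posrE ?expR_gt0 //; lra.
rewrite -div1r ler_pdivrMr; last by lra.
nra.
Qed.
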